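(* Let $m$ and $m_1$ be positive integers, $n=mm_1+2$, and let $\phi$ be a homogeneous polynomial on $\mathbb{R}^n$ of degree $m$ satisfying $|\nabla\phi(x)|^2=m^2|x|^{2m-2}$ and $\Delta\phi(x)=0$. Then: (i) $u=\operatorname{arctanh}\big(\phi(x)|x|^{-m}\big)$ is $p$-harmonic with $p=1+m_1$; (ii) $u=\dfrac{\phi(x)}{\sqrt{|x|^{2m}-\phi(x)^2}}$ is $p$-harmonic with $p=1+\tfrac12 m_1$; (iii) $u=\arcsin\big(\phi(x)|x|^{-m}\big)$ is $\infty$-harmonic, i.e. $\nabla u\cdot\nabla|\nabla u|^2=0$. Moreover, (iv) for every positive integer $k$, the function $u(x,y)=\ln\frac{|x|}{|y|}$, $(x,y)\in\mathbb{R}^k\times\mathbb{R}^k$, is $k$-harmonic in $\mathbb{R}^{2k}$.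
   Context: The $p$-Laplacian of a $C^2$ function $u$ is $\Delta_p u:=|\nabla u|^2\Delta u+\tfrac{p-2}{2}\nabla u\cdot\nabla|\nabla u|^2$; $u$ is $p$-harmonic if $\Delta_p u=0$ (on the open set where $u$ is defined and smooth). *)

(* Defs.v *)
From HB Require Import structures.
From mathcomp Require Import all_boot all_order all_algebra.
From mathcomp Require Import all_classical all_reals all_analysis.
From mathcomp Require mpoly.
Set Implicit Arguments. Unset Strict Implicit. Unset Printing Implicit Defensive.
Import Order.TTheory GRing.Theory Num.Theory.
Import numFieldNormedType.Exports.
Local Open Scope ring_scope.

Section Defs.
Variables (R : realType) (n : nat).

Definition evec (i : 'I_n) : 'rV[R]_n := delta_mx 0 i.

Definition pderiv (i : 'I_n) (f : 'rV[R]_n -> R) (x : 'rV[R]_n) : R :=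
  'D_(evec i) f x.

Definition grad (f : 'rV[R]_n -> R) (x : 'rV[R]_n) : 'rV[R]_n :=
  \row_i pderiv i f x.

Definition dotp (a b : 'rV[R]_n) : R := \sum_i a 0 i * b 0 i.
Definition sqnorm (a : 'rV[R]_n) : R := dotp a a.
Definition enorm (a : 'rV[R]_n) : R := Num.sqrt (sqnorm a).

Definition laplacian (f : 'rV[R]_n -> R) (x : 'rV[R]_n) : R :=
  \sum_i pderiv i (pderiv i f) x.

Definition sqgrad (u : 'rV[R]_n -> R) : 'rV[R]_n -> R :=
  fun x => sqnorm (grad u x).

Definition pLaplacian (p : R) (u : 'rV[R]_n -> R) (x : 'rV[R]_n) : R :=
  sqgrad u x * laplacian u x
  + (p - 2) / 2 * dotp (grad u x) (grad (sqgrad u) x).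

Definition infLaplacian (u : 'rV[R]_n -> R) (x : 'rV[R]_n) : R :=
  dotp (grad u x) (grad (sqgrad u) x).

Definition polyfun (P : mpoly.mpoly n R) : 'rV[R]_n -> R :=
  fun x => mpoly.meval (fun i => x 0 i) P.

End Defs.

Definition artanh (R : realType) (t : R) : R := ln ((1 + t) / (1 - t)) / 2.

(* Main.v *)
Require Import Defs.
From HB Require Import structures.
From mathcomp Require Import all_boot all_order all_algebra.
From mathcomp Require Import all_classical all_reals all_analysis.
From mathcomp Require mpoly.
From mathcomp Require Import ring lra.
Import Order.TTheory GRing.Theory Num.Theory.
Import numFieldNormedType.Exports.
Local Open Scope ring_scope.
Set Implicit Arguments. Unset Strict Implicit. Unset Printing Implicit Defensive.
Local Open Scope classical_set_scope.
Local Open Scope ring_scope.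
Canonical mpoly.mpoly_comp_mpoly__canonical__Algebra_Additive.
Canonical mpoly.mpoly_comp_mpoly__canonical__GRing_LRMorphism.
Canonical mpoly.mpoly_comp_mpoly__canonical__GRing_Linear.
Canonical mpoly.mpoly_comp_mpoly__canonical__GRing_RMorphism.
Canonical mpoly.mpoly_inject__canonical__Algebra_Additive.
Canonical mpoly.mpoly_inject__canonical__GRing_RMorphism.
Canonical mpoly.mpoly_inject_cast__canonical__Algebra_Additive.
Canonical mpoly.mpoly_inject_cast__canonical__GRing_RMorphism.
Canonical mpoly.mpoly_ishomog1_pred__canonical__Algebra_AddClosed.
Canonical mpoly.mpoly_ishomog1_pred__canonical__Algebra_OppClosed.
Canonical mpoly.mpoly_ishomog1_pred__canonical__Algebra_ZmodClosed.
Canonical mpoly.mpoly_ishomog1_pred__canonical__GRing_SubmodClosed.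
Canonical mpoly.mpoly_map_mpoly__canonical__Algebra_Additive.
Canonical mpoly.mpoly_map_mpoly__canonical__GRing_RMorphism.
Canonical mpoly.mpoly_mcoeff__canonical__Algebra_Additive.
Canonical mpoly.mpoly_mcoeff__canonical__GRing_LRMorphism.
Canonical mpoly.mpoly_mcoeff__canonical__GRing_Linear.
Canonical mpoly.mpoly_mcoeff__canonical__GRing_RMorphism.
Canonical mpoly.mpoly_mdeg__canonical__mpoly_Measure.
Canonical mpoly.mpoly_mderiv__canonical__Algebra_Additive.
Canonical mpoly.mpoly_mderiv__canonical__GRing_Linear.
Canonical mpoly.mpoly_mderivm__canonical__Algebra_Additive.
Canonical mpoly.mpoly_mderivm__canonical__GRing_Linear.
Canonical mpoly.mpoly_meval__canonical__Algebra_Additive.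
Canonical mpoly.mpoly_meval__canonical__GRing_LRMorphism.
Canonical mpoly.mpoly_meval__canonical__GRing_Linear.
Canonical mpoly.mpoly_meval__canonical__GRing_RMorphism.
Canonical mpoly.mpoly_mmap__canonical__Algebra_Additive.
Canonical mpoly.mpoly_mmap__canonical__GRing_RMorphism.
Canonical mpoly.mpoly_mnm_add__canonical__Monoid_ComLaw.
Canonical mpoly.mpoly_mnm_add__canonical__Monoid_Law.
Canonical mpoly.mpoly_mnm_add__canonical__SemiGroup_ComLaw.
Canonical mpoly.mpoly_mnm_add__canonical__SemiGroup_Law.
Canonical mpoly.mpoly_mnmwgt__canonical__mpoly_Measure.
Canonical mpoly.mpoly_mpoly__canonical__Algebra_AddMagma.
Canonical mpoly.mpoly_mpoly__canonical__Algebra_AddSemigroup.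
Canonical mpoly.mpoly_mpoly__canonical__Algebra_AddUMagma.
Canonical mpoly.mpoly_mpoly__canonical__Algebra_BaseAddMagma.
Canonical mpoly.mpoly_mpoly__canonical__Algebra_BaseAddUMagma.
Canonical mpoly.mpoly_mpoly__canonical__Algebra_BaseZmodule.
Canonical mpoly.mpoly_mpoly__canonical__Algebra_ChoiceBaseAddMagma.
Canonical mpoly.mpoly_mpoly__canonical__Algebra_ChoiceBaseAddUMagma.
Canonical mpoly.mpoly_mpoly__canonical__Algebra_Nmodule.
Canonical mpoly.mpoly_mpoly__canonical__Algebra_Zmodule.
Canonical mpoly.mpoly_mpoly__canonical__GRing_Algebra.
Canonical mpoly.mpoly_mpoly__canonical__GRing_ComAlgebra.
Canonical mpoly.mpoly_mpoly__canonical__GRing_ComNzRing.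
Canonical mpoly.mpoly_mpoly__canonical__GRing_ComNzSemiRing.
Canonical mpoly.mpoly_mpoly__canonical__GRing_ComPzRing.
Canonical mpoly.mpoly_mpoly__canonical__GRing_ComPzSemiRing.
Canonical mpoly.mpoly_mpoly__canonical__GRing_ComSemiAlgebra.
Canonical mpoly.mpoly_mpoly__canonical__GRing_ComUnitAlgebra.
Canonical mpoly.mpoly_mpoly__canonical__GRing_ComUnitRing.
Canonical mpoly.mpoly_mpoly__canonical__GRing_IntegralDomain.
Canonical mpoly.mpoly_mpoly__canonical__GRing_LSemiAlgebra.
Canonical mpoly.mpoly_mpoly__canonical__GRing_LSemiModule.
Canonical mpoly.mpoly_mpoly__canonical__GRing_Lalgebra.
Canonical mpoly.mpoly_mpoly__canonical__GRing_Lmodule.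
Canonical mpoly.mpoly_mpoly__canonical__GRing_NzRing.
Canonical mpoly.mpoly_mpoly__canonical__GRing_NzSemiRing.
Canonical mpoly.mpoly_mpoly__canonical__GRing_PzRing.
Canonical mpoly.mpoly_mpoly__canonical__GRing_PzSemiRing.
Canonical mpoly.mpoly_mpoly__canonical__GRing_SemiAlgebra.
Canonical mpoly.mpoly_mpoly__canonical__GRing_UnitAlgebra.
Canonical mpoly.mpoly_mpoly__canonical__GRing_UnitRing.
Canonical mpoly.mpoly_mpoly__canonical__choice_Choice.
Canonical mpoly.mpoly_mpoly__canonical__choice_SubChoice.
Canonical mpoly.mpoly_mpoly__canonical__eqtype_Equality.
Canonical mpoly.mpoly_mpoly__canonical__eqtype_SubEquality.
Canonical mpoly.mpoly_mpoly__canonical__eqtype_SubType.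
Canonical mpoly.mpoly_mpwiden__canonical__Algebra_Additive.
Canonical mpoly.mpoly_mpwiden__canonical__GRing_RMorphism.
Canonical mpoly.mpoly_msym__canonical__Algebra_Additive.
Canonical mpoly.mpoly_msym__canonical__GRing_LRMorphism.
Canonical mpoly.mpoly_msym__canonical__GRing_Linear.
Canonical mpoly.mpoly_msym__canonical__GRing_RMorphism.
Canonical mpoly.mpoly_multinom__canonical__Order_BDistrLattice.
Canonical mpoly.mpoly_multinom__canonical__Order_BJoinSemilattice.
Canonical mpoly.mpoly_multinom__canonical__Order_BLattice.
Canonical mpoly.mpoly_multinom__canonical__Order_BMeetSemilattice.
Canonical mpoly.mpoly_multinom__canonical__Order_BPOrder.
Canonical mpoly.mpoly_multinom__canonical__Order_BPreorder.
Canonical mpoly.mpoly_multinom__canonical__Order_BTotal.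
Canonical mpoly.mpoly_multinom__canonical__Order_DistrLattice.
Canonical mpoly.mpoly_multinom__canonical__Order_JoinSemilattice.
Canonical mpoly.mpoly_multinom__canonical__Order_Lattice.
Canonical mpoly.mpoly_multinom__canonical__Order_MeetSemilattice.
Canonical mpoly.mpoly_multinom__canonical__Order_POrder.
Canonical mpoly.mpoly_multinom__canonical__Order_Preorder.
Canonical mpoly.mpoly_multinom__canonical__Order_Total.
Canonical mpoly.mpoly_multinom__canonical__choice_Choice.
Canonical mpoly.mpoly_multinom__canonical__choice_Countable.
Canonical mpoly.mpoly_multinom__canonical__choice_SubChoice.
Canonical mpoly.mpoly_multinom__canonical__choice_SubCountable.
Canonical mpoly.mpoly_multinom__canonical__eqtype_Equality.
Canonical mpoly.mpoly_multinom__canonical__eqtype_SubEquality.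
Canonical mpoly.mpoly_multinom__canonical__eqtype_SubType.
Canonical mpoly.mpoly_muni__canonical__Algebra_Additive.
Canonical mpoly.mpoly_muni__canonical__GRing_RMorphism.
Canonical mpoly.mpoly_mwiden__canonical__Algebra_Additive.
Canonical mpoly.mpoly_mwiden__canonical__GRing_RMorphism.
Canonical mpoly.mpoly_pihomog__canonical__Algebra_Additive.
Canonical mpoly.mpoly_pihomog__canonical__GRing_Linear.
Lemma line_derive (R : realType) (V : normedModType R) (f : V -> R) x v :
  'D_v f x = 'D_(1 : R) (fun h : R => f (h *: v + x)) (0 : R).
Proof.
rewrite /derive.
have -> : (fun h : R => h^-1 *: ((f \o shift x) (h *: v) - f x)) =
  (fun h : R => h^-1 *: (((fun h0 : R => f (h0 *: v + x)) \o shift 0) (h *: 1)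
     - f (0 *: v + x))).
  by rewrite funeqE => h /=; rewrite addr0 scale0r add0r [_%:A]mulr1.
by [].
Qed.

Lemma line_is_derive (R : realType) (V : normedModType R) (f : V -> R) x v df :
  is_derive x v f df <-> is_derive (0 : R) (1 : R) (fun h : R => f (h *: v + x)) df.
Proof.
split=> [[d e]|[d e]]; split.
- by move/derivable1P: d.
- by rewrite -line_derive.
- by apply/derivable1P.
- by rewrite line_derive.
Qed.

Lemma der_comp (R : realType) (V : normedModType R) (f : V -> R) (g : R -> R) x v df dg :
  is_derive x v f df -> is_derive (f x) 1 g dg ->
  is_derive x v (fun y => g (f y)) (dg * df).
Proof.
move=> /line_is_derive hf hg; apply/line_is_derive.
have hg' : is_derive ((fun h : R => f (h *: v + x)) 0) 1 g dg.
  by rewrite /= scale0r add0r.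
exact: (is_derive1_comp hg' hf).
Qed.

Lemma der_add (R : realType) (V : normedModType R) (f g : V -> R) x v df dg :
  is_derive x v f df -> is_derive x v g dg ->
  is_derive x v (fun y => f y + g y) (df + dg).
Proof. move=> hf hg; exact: (is_deriveD hf hg). Qed.

Lemma der_sub (R : realType) (V : normedModType R) (f g : V -> R) x v df dg :
  is_derive x v f df -> is_derive x v g dg ->
  is_derive x v (fun y => f y - g y) (df - dg).
Proof. move=> hf hg; exact: (is_deriveB hf hg). Qed.

Lemma der_mul (R : realType) (V : normedModType R) (f g : V -> R) x v df dg :
  is_derive x v f df -> is_derive x v g dg ->
  is_derive x v (fun y => f y * g y) (f x * dg + g x * df).
Proof. move=> hf hg; exact: (is_deriveM hf hg). Qed.

Lemma der_cst (R : realType) (V : normedModType R) (c : R) (x v : V) :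
  is_derive x v (fun _ => c) 0.
Proof. exact: is_derive_cst. Qed.
Arguments der_cst {R V} c {x v}.

Lemma der_exp (R : realType) (V : normedModType R) (f : V -> R) k x v df :
  is_derive x v f df ->
  is_derive x v (fun y => f y ^+ k) (k%:R * f x ^+ k.-1 * df).
Proof.
move=> hf; have := is_deriveX k hf.
suff -> : (f ^+ k) = (fun y => f y ^+ k) by [].
by apply/funext => y; rewrite exprfctE.
Qed.

Lemma der_inv (R : realType) (V : normedModType R) (f : V -> R) x v df :
  f x != 0 -> is_derive x v f df ->
  is_derive x v (fun y => (f y)^-1) (- (f x ^+ 2)^-1 * df).
Proof.
move=> fx0 [d e]; split; first exact: derivableV.
by rewrite deriveV // e.
Qed.

Lemma der_sum (R : realType) (V : normedModType R) n (F : 'I_n -> V -> R) x v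
  (dF : 'I_n -> R) : (forall i, is_derive x v (F i) (dF i)) ->
  is_derive x v (fun y => \sum_(i < n) F i y) (\sum_(i < n) dF i).
Proof.
move=> h; have := is_derive_sum h.
suff -> : (\sum_(i < n) F i) = (fun y => \sum_(i < n) F i y) by [].
by apply/funext => y; rewrite fct_sumE.
Qed.

Lemma der_eq (R : realType) (V : normedModType R) (f : V -> R) x v df df' :
  is_derive x v f df -> df = df' -> is_derive x v f df'.
Proof. by move=> ? <-. Qed.

Lemma der_near (R : realType) (V : normedModType R) (f g : V -> R) x v df :
  (\forall y \near x, f y = g y) -> is_derive x v f df -> is_derive x v g df.
Proof. move=> h; exact: near_eq_is_derive. Qed.

Lemma der_invB (R : realType) (V : normedModType R) (f : V -> R) x v df :
  is_derive x v f df -> f x != 0 ->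
  is_derive x v (fun y => (f y)^-1) (- (f x ^+ 2)^-1 * df).
Proof. by move=> h h0; exact: der_inv. Qed.
Lemma evecE (R : realType) n (i j : 'I_n) : evec R i 0 j = (i == j)%:R.
Proof. by rewrite /evec mxE eqxx eq_sym. Qed.

Lemma der_coord (R : realType) n (j : 'I_n) (y v : 'rV[R]_n) :
  is_derive y v (fun z : 'rV[R]_n => z 0 j) (v 0 j).
Proof.
apply/line_is_derive.
have -> : (fun h : R => (h *: v + y) 0 j) = (fun h : R => h * v 0 j + y 0 j).
  by apply/funext => h; rewrite !mxE.
apply: der_eq (der_add (der_mul (is_derive_id _ _) (der_cst _)) (der_cst _)) _.
by rewrite /= mulr0 addr0 add0r mulr1.
Qed.

Lemma der_sqnorm (R : realType) n (y v : 'rV[R]_n) :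
  is_derive y v (@sqnorm R n) (2 * dotp y v).
Proof.
have H := der_sum (fun i => der_mul (der_coord i y v) (der_coord i y v)).
apply: der_eq H _.
rewrite /dotp mulr_sumr; apply: eq_bigr => i _; rewrite /=; ring.
Qed.

Lemma dotp_evec (R : realType) n (y : 'rV[R]_n) i : dotp y (evec R i) = y 0 i.
Proof.
rewrite /dotp (bigD1 i) //= evecE eqxx mulr1 big1 ?addr0 // => j ji.
by rewrite evecE eq_sym (negbTE ji) mulr0.
Qed.

Lemma sqnorm_ge0 (R : realType) n (y : 'rV[R]_n) : 0 <= sqnorm y.
Proof. by apply: sumr_ge0 => i _; rewrite -expr2 sqr_ge0. Qed.

Lemma sqnorm_gt0 (R : realType) n (y : 'rV[R]_n) : y != 0 -> 0 < sqnorm y.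
Proof.
move=> y0; rewrite lt_def sqnorm_ge0 andbT; apply: contraNN y0 => /eqP h.
apply/eqP/rowP => i; rewrite mxE.
have hF : forall j : 'I_n, predT j -> 0 <= y 0 j * y 0 j.
  by move=> j _; rewrite -expr2 sqr_ge0.
have /eqP := @psumr_eq0P R _ predT (fun j => y 0 j * y 0 j) hF h i isT.
by rewrite mulf_eq0 orbb => /eqP.
Qed.
Notation MX R i := (@mpoly.mpolyX _ R (mpoly.mnm1 i)).
Notation mfun := mpoly.fun_of_multinom.

Lemma polyfunD (R : realType) n (P Q : mpoly.mpoly n R) y :
  polyfun (P + Q) y = polyfun P y + polyfun Q y.
Proof. exact: mpoly.mevalD. Qed.

Lemma polyfunM (R : realType) n (P Q : mpoly.mpoly n R) y :
  polyfun (P * Q) y = polyfun P y * polyfun Q y.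
Proof. exact: mpoly.mevalM. Qed.

Lemma polyfunC (R : realType) n (c : R) y :
  polyfun (mpoly.mpolyC n c) y = c.
Proof. exact: mpoly.mevalC. Qed.

Lemma polyfunZ (R : realType) n c (P : mpoly.mpoly n R) y :
  polyfun (c *: P) y = c * polyfun P y.
Proof. exact: mpoly.mevalZ. Qed.

Lemma polyfun0 (R : realType) n (y : 'rV[R]_n) : polyfun (0 : mpoly.mpoly n R) y = 0.
Proof. exact: mpoly.meval0. Qed.

Lemma polyfunX (R : realType) n (i : 'I_n) (y : 'rV[R]_n) : polyfun (MX R i) y = y 0 i.
Proof. exact: mpoly.mevalXU. Qed.

Lemma der_polyfun (R : realType) n (i : 'I_n) (P : mpoly.mpoly n R) y :
  is_derive y (evec R i) (polyfun P) (polyfun (mpoly.mderiv i P) y).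
Proof.
pose Q (P : mpoly.mpoly n R) := forall y,
  is_derive y (evec R i) (polyfun P) (polyfun (mpoly.mderiv i P) y).
have QD : forall P1 P2, Q P1 -> Q P2 -> Q (P1 + P2).
  move=> P1 P2 h1 h2 z.
  have -> : polyfun (P1 + P2) = (fun y => polyfun P1 y + polyfun P2 y).
    by apply/funext => w; rewrite polyfunD.
  by apply: der_eq (der_add (h1 z) (h2 z)) _; rewrite mpoly.mderivD polyfunD.
have QM : forall P1 P2, Q P1 -> Q P2 -> Q (P1 * P2).
  move=> P1 P2 h1 h2 z.
  have -> : polyfun (P1 * P2) = (fun y => polyfun P1 y * polyfun P2 y).
    by apply/funext => w; rewrite polyfunM.
  apply: der_eq (der_mul (h1 z) (h2 z)) _.
  by rewrite mpoly.mderivM polyfunD !polyfunM addrC mulrC.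
have QC : forall c, Q (mpoly.mpolyC n c).
  move=> c z; have -> : polyfun (mpoly.mpolyC n c) = (fun _ => c).
    by apply/funext => w; rewrite polyfunC.
  by rewrite mpoly.mderivC polyfun0; exact: der_cst.
have QX : forall j, Q (MX R j).
  move=> j z; have -> : polyfun (MX R j) = (fun w : 'rV[R]_n => w 0 j).
    by apply/funext => w; rewrite polyfunX.
  apply: der_eq (der_coord j z (evec R i)) _.
  rewrite mpoly.mderivX mpoly.mnm1E polyfunZ /polyfun mpoly.mevalX evecE.
  case: (eqVneq j i) => [->|ne].
    rewrite mul1r big1 // => k _.
    by rewrite mpoly.mnmBE subnn expr0.
  by rewrite mul0r.
have QZ : forall c P, Q P -> Q (c *: P).
  move=> c P1 h; rewrite -mpoly.mul_mpolyC; exact: QM.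
have QXn : forall j k, Q (MX R j ^+ k).
  move=> j; elim=> [|k ih]; first by rewrite expr0 -mpoly.mpolyC1; exact: QC.
  by rewrite exprS; apply: QM.
have Qmono : forall m, Q (mpoly.mpolyX R m).
  move=> m; rewrite mpoly.mpolyXE_id.
  apply: (big_ind Q).
  - by rewrite -mpoly.mpolyC1; exact: QC.
  - exact: QM.
  - by move=> k _; exact: QXn.
move: y; elim/mpoly.mpolyind: P => [|c m p _ _ ih].
  by have := QC 0; rewrite mpoly.mpolyC0.
by apply: QD => //; apply: QZ.
Qed.
Lemma diff_polyfun (R : realType) n (P : mpoly.mpoly n R) y :
  differentiable (polyfun P) y.
Proof.
pose Q (P : mpoly.mpoly n R) := forall y, differentiable (polyfun P) y.
have QD : forall P1 P2, Q P1 -> Q P2 -> Q (P1 + P2).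
  move=> P1 P2 h1 h2 z.
  have -> : polyfun (P1 + P2) = polyfun P1 + polyfun P2.
    by apply/funext => w; rewrite polyfunD.
  exact: differentiableD.
have QM : forall P1 P2, Q P1 -> Q P2 -> Q (P1 * P2).
  move=> P1 P2 h1 h2 z.
  have -> : polyfun (P1 * P2) = polyfun P1 * polyfun P2.
    by apply/funext => w; rewrite polyfunM.
  exact: differentiableM.
have QC : forall c, Q (mpoly.mpolyC n c).
  move=> c z; have -> : polyfun (mpoly.mpolyC n c) = cst c.
    by apply/funext => w; rewrite polyfunC.
  exact: differentiable_cst.
have QX : forall j, Q (MX R j).
  move=> j z; have -> : polyfun (MX R j) = (fun w : 'rV[R]_n => w 0 j).
    by apply/funext => w; rewrite polyfunX.
  exact: differentiable_coord.
have QZ : forall c P, Q P -> Q (c *: P).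
  move=> c P1 h; rewrite -mpoly.mul_mpolyC; exact: QM.
have QXn : forall j k, Q (MX R j ^+ k).
  move=> j; elim=> [|k ih]; first by rewrite expr0 -mpoly.mpolyC1; exact: QC.
  by rewrite exprS; apply: QM.
have Qmono : forall m, Q (mpoly.mpolyX R m).
  move=> m; rewrite mpoly.mpolyXE_id.
  apply: (big_ind Q).
  - by rewrite -mpoly.mpolyC1; exact: QC.
  - exact: QM.
  - by move=> k _; exact: QXn.
move: y; elim/mpoly.mpolyind: P => [|c m p _ _ ih].
  by have := QC 0; rewrite mpoly.mpolyC0.
by apply: QD => //; apply: QZ.
Qed.

Lemma euler_mono (R : realType) n (m : mpoly.multinom n) :
  \sum_(i < n) MX R i * mpoly.mderiv i (mpoly.mpolyX R m)
  = (mpoly.mdeg m)%:R *: mpoly.mpolyX R m.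
Proof.
rewrite mpoly.mdegE natr_sum scaler_suml; apply: eq_bigr => i _.
rewrite mpoly.mderivX -scalerAr.
have [->|mi0] := eqVneq (mfun m i) 0%N; first by rewrite !scale0r.
congr (_ *: _); rewrite -mpoly.mpolyXD; congr (mpoly.mpolyX R _).
apply/mpoly.mnmP => j; rewrite mpoly.mnmDE mpoly.mnmBE mpoly.mnm1E.
case: (eqVneq i j) => [<-|_] /=; last by rewrite subn0.
by rewrite add1n subn1 prednK // lt0n.
Qed.
Lemma euler_poly (R : realType) n d (P : mpoly.mpoly n R) :
  P \is @mpoly.ishomog1 n R d (mpoly.mpoly_mdeg__canonical__mpoly_Measure n) ->
  \sum_(i < n) MX R i * mpoly.mderiv i P = d%:R *: P.
Proof.
move=> hP.
have E : forall i, mpoly.mderiv i P =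
   \sum_(k <- mpoly.msupp P) mpoly.mcoeff k P *: mpoly.mderiv i (mpoly.mpolyX R k).
  move=> i; rewrite {1}(mpoly.mpolyE P) raddf_sum; apply: eq_bigr => k _.
  exact: mpoly.mderivZ.
under eq_bigr => i _ do rewrite E mulr_sumr.
rewrite exchange_big /= [in RHS](mpoly.mpolyE P) scaler_sumr.
rewrite big_seq [in RHS]big_seq; apply: eq_bigr => k kP.
under eq_bigr => i _ do rewrite -scalerAr.
rewrite -scaler_sumr euler_mono scalerA mulrC -scalerA.
by rewrite (mpoly.dhomog_mf hP kP).
Qed.

Lemma euler_fun (R : realType) n d (P : mpoly.mpoly n R) (y : 'rV[R]_n) :
  P \is @mpoly.ishomog1 n R d (mpoly.mpoly_mdeg__canonical__mpoly_Measure n) ->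
  \sum_(i < n) y 0 i * polyfun (mpoly.mderiv i P) y = d%:R * polyfun P y.
Proof.
move=> /euler_poly /(congr1 (fun Q => polyfun Q y)).
rewrite polyfunZ => <-.
rewrite /polyfun (big_morph _ (mpoly.mevalD _) (mpoly.meval0 _)).
apply: eq_bigr => i _; rewrite mpoly.mevalM; congr (_ * _).
by rewrite mpoly.mevalXU.
Qed.
Lemma der_loc (R : realType) n (Dset : 'rV[R]_n -> Prop)
  (HD : forall y, Dset y -> \forall z \near y, Dset z)
  (f g : 'rV[R]_n -> R) y v d :
  Dset y -> (forall z, Dset z -> f z = g z) -> is_derive y v f d -> is_derive y v g d.
Proof.
move=> Dy fg; apply: der_near; apply: filterS (HD y Dy) => z; exact: fg.
Qed.

Lemma sqgradE (R : realType) n (u : 'rV[R]_n -> R) y :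
  sqgrad u y = \sum_i pderiv i u y ^+ 2.
Proof. by rewrite /sqgrad /sqnorm /dotp; apply: eq_bigr => i _; rewrite mxE expr2. Qed.

Lemma formulas (R : realType) n (Dset : 'rV[R]_n -> Prop)
  (HD : forall y, Dset y -> \forall z \near y, Dset z)
  (u : 'rV[R]_n -> R) x (U1 : 'I_n -> 'rV[R]_n -> R) (u2 : 'I_n -> R)
  (S : 'rV[R]_n -> R) (S1 : 'I_n -> R) :
  Dset x ->
  (forall y, Dset y -> forall i, is_derive y (evec R i) u (U1 i y)) ->
  (forall i, is_derive x (evec R i) (U1 i) (u2 i)) ->
  (forall y, Dset y -> sqgrad u y = S y) ->
  (forall j, is_derive x (evec R j) S (S1 j)) ->
  [/\ sqgrad u x = \sum_i U1 i x ^+ 2,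
      laplacian u x = \sum_i u2 i &
      infLaplacian u x = \sum_j U1 j x * S1 j].
Proof.
move=> Dx H1 H2 H3 H4.
have e1 : forall y, Dset y -> forall i, pderiv i u y = U1 i y.
  by move=> y Dy i; case: (H1 y Dy i).
have e2 : forall i, pderiv i (pderiv i u) x = u2 i.
  move=> i; rewrite /pderiv (near_eq_derive (g := U1 i)).
    by case: (H2 i).
  by apply: filterS (HD x Dx) => z Dz; exact: e1.
have e3 : forall j, pderiv j (sqgrad u) x = S1 j.
  move=> j; rewrite /pderiv (near_eq_derive (g := S)).
    by case: (H4 j).
  by apply: filterS (HD x Dx) => z Dz; exact: H3.
split.
- by rewrite sqgradE; apply: eq_bigr => i _; rewrite e1.
- by rewrite /laplacian; apply: eq_bigr => i _; rewrite e2.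
- rewrite /infLaplacian /dotp; apply: eq_bigr => j _.
  by rewrite !mxE e1 // e3.
Qed.
Lemma sum_lin3 (R : realType) n (a b c : R) (F G H : 'I_n -> R) :
  \sum_i (a * F i + b * G i + c * H i) = a * \sum_i F i + b * \sum_i G i + c * \sum_i H i.
Proof. by rewrite !big_split /= -!mulr_sumr. Qed.

Lemma sum_lin4 (R : realType) n (a b c d : R) (F G H K : 'I_n -> R) :
  \sum_i (a * F i + b * G i + c * H i + d * K i) =
  a * \sum_i F i + b * \sum_i G i + c * \sum_i H i + d * \sum_i K i.
Proof. by rewrite !big_split /= -!mulr_sumr. Qed.

Lemma dotp0r (R : realType) n (y : 'rV[R]_n) : dotp y 0 = 0.
Proof. by rewrite /dotp big1 // => i _; rewrite mxE mulr0. Qed.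

Lemma dotpC (R : realType) n (y z : 'rV[R]_n) : dotp y z = dotp z y.
Proof. by rewrite /dotp; apply: eq_bigr => i _; rewrite mulrC. Qed.

Lemma lsub_evec_l (R : realType) k1 k2 (j0 : 'I_k1) :
  lsubmx (evec R (lshift k2 j0)) = evec R j0.
Proof. by apply/rowP => j; rewrite mxE !evecE eq_lshift. Qed.

Lemma lsub_evec_r (R : realType) k1 k2 (j0 : 'I_k2) :
  lsubmx (evec R (rshift k1 j0)) = 0 :> 'rV_k1.
Proof. by apply/rowP => j; rewrite [LHS]mxE evecE eq_rlshift mxE. Qed.

Lemma rsub_evec_l (R : realType) k1 k2 (j0 : 'I_k1) :
  rsubmx (evec R (lshift k2 j0)) = 0 :> 'rV_k2.
Proof. by apply/rowP => j; rewrite [LHS]mxE evecE eq_lrshift mxE. Qed.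

Lemma rsub_evec_r (R : realType) k1 k2 (j0 : 'I_k2) :
  rsubmx (evec R (rshift k1 j0)) = evec R j0.
Proof. by apply/rowP => j; rewrite mxE !evecE eq_rshift. Qed.

Lemma dotp_evecl (R : realType) n (y : 'rV[R]_n) i : dotp (evec R i) y = y 0 i.
Proof. by rewrite dotpC dotp_evec. Qed.

Lemma der_dotp_l (R : realType) k1 k2 (c : 'rV[R]_k1) (w v : 'rV[R]_(k1 + k2)) :
  is_derive w v (fun w => dotp (lsubmx w) c) (dotp (lsubmx v) c).
Proof.
have -> : (fun w : 'rV[R]_(k1 + k2) => dotp (lsubmx w) c) =
    (fun w => \sum_(j < k1) w 0 (lshift k2 j) * c 0 j).
  by apply/funext => y; rewrite /dotp; apply: eq_bigr => j _; rewrite mxE.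
apply: der_eq (der_sum (fun j => der_mul (der_coord (lshift k2 j) w v) (der_cst (c 0 j)))) _.
rewrite /dotp; apply: eq_bigr => j _; rewrite mxE; ring.
Qed.

Lemma der_dotp_r (R : realType) k1 k2 (c : 'rV[R]_k2) (w v : 'rV[R]_(k1 + k2)) :
  is_derive w v (fun w => dotp (rsubmx w) c) (dotp (rsubmx v) c).
Proof.
have -> : (fun w : 'rV[R]_(k1 + k2) => dotp (rsubmx w) c) =
    (fun w => \sum_(j < k2) w 0 (rshift k1 j) * c 0 j).
  by apply/funext => y; rewrite /dotp; apply: eq_bigr => j _; rewrite mxE.
apply: der_eq (der_sum (fun j => der_mul (der_coord (rshift k1 j) w v) (der_cst (c 0 j)))) _.
rewrite /dotp; apply: eq_bigr => j _; rewrite mxE; ring.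
Qed.

Lemma der_sq_l (R : realType) k1 k2 (w v : 'rV[R]_(k1 + k2)) :
  is_derive w v (fun w => sqnorm (lsubmx w)) (2 * dotp (lsubmx w) (lsubmx v)).
Proof.
have -> : (fun w : 'rV[R]_(k1 + k2) => sqnorm (lsubmx w)) =
    (fun w => \sum_(j < k1) w 0 (lshift k2 j) * w 0 (lshift k2 j)).
  by apply/funext => y; rewrite /sqnorm /dotp; apply: eq_bigr => j _; rewrite mxE.
apply: der_eq (der_sum (fun j => der_mul (der_coord (lshift k2 j) w v) (der_coord (lshift k2 j) w v))) _.
rewrite /dotp mulr_sumr; apply: eq_bigr => j _; rewrite !mxE; ring.
Qed.

Lemma der_sq_r (R : realType) k1 k2 (w v : 'rV[R]_(k1 + k2)) :
  is_derive w v (fun w => sqnorm (rsubmx w)) (2 * dotp (rsubmx w) (rsubmx v)).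
Proof.
have -> : (fun w : 'rV[R]_(k1 + k2) => sqnorm (rsubmx w)) =
    (fun w => \sum_(j < k2) w 0 (rshift k1 j) * w 0 (rshift k1 j)).
  by apply/funext => y; rewrite /sqnorm /dotp; apply: eq_bigr => j _; rewrite mxE.
apply: der_eq (der_sum (fun j => der_mul (der_coord (rshift k1 j) w v) (der_coord (rshift k1 j) w v))) _.
rewrite /dotp mulr_sumr; apply: eq_bigr => j _; rewrite !mxE; ring.
Qed.

Lemma sqgrad_formula (R : realType) n (u : 'rV[R]_n -> R) y (U1 : 'I_n -> R) :
  (forall i, is_derive y (evec R i) u (U1 i)) -> sqgrad u y = \sum_i U1 i ^+ 2.
Proof.
by move=> h; rewrite sqgradE; apply: eq_bigr => i _; case: (h i) => _ e; rewrite /pderiv e.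
Qed.
Lemma sqnorm_polyfun (R : realType) n :
  @sqnorm R n = polyfun (\sum_(i < n) MX R i * MX R i).
Proof.
apply/funext => y; rewrite /polyfun (big_morph _ (mpoly.mevalD _) (mpoly.meval0 _)).
by rewrite /sqnorm /dotp; apply: eq_bigr => i _; rewrite mpoly.mevalM mpoly.mevalXU.
Qed.

Lemma diff_sqnorm (R : realType) n (y : 'rV[R]_n) : differentiable (@sqnorm R n) y.
Proof. rewrite sqnorm_polyfun; exact: diff_polyfun. Qed.

Lemma near_pos (R : realType) n (f : 'rV[R]_n -> R) x :
  differentiable f x -> 0 < f x -> \forall y \near x, 0 < f y.
Proof.
move=> /differentiable_continuous fc fx0.
exact: (cvgr_gt (f x) fc 0 fx0).
Qed.

Lemma diff_sq_l (R : realType) k1 k2 (w : 'rV[R]_(k1 + k2)) :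
  differentiable (fun w : 'rV[R]_(k1 + k2) => sqnorm (lsubmx w)) w.
Proof.
apply: (@differentiable_comp _ _ _ _ lsubmx (@sqnorm R k1)).
  exact: differentiable_lsubmx.
exact: diff_sqnorm.
Qed.

Lemma diff_sq_r (R : realType) k1 k2 (w : 'rV[R]_(k1 + k2)) :
  differentiable (fun w : 'rV[R]_(k1 + k2) => sqnorm (rsubmx w)) w.
Proof.
apply: (@differentiable_comp _ _ _ _ rsubmx (@sqnorm R k2)).
  exact: differentiable_rsubmx.
exact: diff_sqnorm.
Qed.

Lemma sumLL (R : realType) k1 k2 :
  \sum_(i < k1 + k2) dotp (lsubmx (evec R i)) (lsubmx (evec R i)) = k1%:R.
Proof.
rewrite big_split_ord /=.
under eq_bigr do rewrite lsub_evec_l dotp_evec evecE eqxx.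
under [X in _ + X]eq_bigr do rewrite lsub_evec_r dotp0r.
by rewrite [X in _ + X]big1 // addr0 sumr_const card_ord.
Qed.

Lemma sumMM (R : realType) k1 k2 :
  \sum_(i < k1 + k2) dotp (rsubmx (evec R i)) (rsubmx (evec R i)) = k2%:R.
Proof.
rewrite big_split_ord /=.
under eq_bigr do rewrite rsub_evec_l dotp0r.
under [X in _ + X]eq_bigr do rewrite rsub_evec_r dotp_evec evecE eqxx.
by rewrite big1 // add0r sumr_const card_ord.
Qed.

Lemma sumL2 (R : realType) k1 k2 (w : 'rV[R]_(k1 + k2)) :
  \sum_(i < k1 + k2) dotp (lsubmx w) (lsubmx (evec R i)) ^+ 2 = sqnorm (lsubmx w).
Proof.
rewrite big_split_ord /=.
under eq_bigr do rewrite lsub_evec_l dotp_evec.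
under [X in _ + X]eq_bigr do rewrite lsub_evec_r dotp0r.
rewrite [X in _ + X]big1 ?addr0; last by move=> i _; rewrite expr2 mulr0.
by rewrite /sqnorm /dotp; apply: eq_bigr => i _; rewrite expr2.
Qed.

Lemma sumM2 (R : realType) k1 k2 (w : 'rV[R]_(k1 + k2)) :
  \sum_(i < k1 + k2) dotp (rsubmx w) (rsubmx (evec R i)) ^+ 2 = sqnorm (rsubmx w).
Proof.
rewrite big_split_ord /=.
under eq_bigr do rewrite rsub_evec_l dotp0r.
under [X in _ + X]eq_bigr do rewrite rsub_evec_r dotp_evec.
rewrite big1 ?add0r; last by move=> i _; rewrite expr2 mulr0.
by rewrite /sqnorm /dotp; apply: eq_bigr => i _; rewrite expr2.
Qed.

Lemma sumLM (R : realType) k1 k2 (w : 'rV[R]_(k1 + k2)) :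
  \sum_(i < k1 + k2) dotp (lsubmx w) (lsubmx (evec R i)) * dotp (rsubmx w) (rsubmx (evec R i)) = 0.
Proof.
rewrite big_split_ord /=.
under eq_bigr do rewrite rsub_evec_l dotp0r mulr0.
under [X in _ + X]eq_bigr do rewrite lsub_evec_r dotp0r mul0r.
by rewrite !big1 ?addr0.
Qed.
Lemma ln_sqrt (R : realType) (a : R) : 0 < a -> ln (Num.sqrt a) = ln a / 2.
Proof.
move=> a0; rewrite -{2}(sqr_sqrtr (ltW a0)) lnXn ?sqrtr_gt0 //.
by rewrite mulr2n mulrDl -splitr.
Qed.

Lemma part4 (R : realType) (k : nat) : (0 < k)%N ->
  forall z : 'rV[R]_(k + k), lsubmx z != 0 -> rsubmx z != 0 ->
  pLaplacian k%:R
    (fun w : 'rV[R]_(k + k) => ln (enorm (lsubmx w) / enorm (rsubmx w))) z = 0.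
Proof.
move=> _ z hl hr.
pose A := fun w : 'rV[R]_(k + k) => sqnorm (lsubmx w).
pose B := fun w : 'rV[R]_(k + k) => sqnorm (rsubmx w).
pose Dset := fun w => 0 < A w /\ 0 < B w.
have HD : forall y, Dset y -> \forall w \near y, Dset w.
  move=> y [Ay By]; have h1 := near_pos (diff_sq_l y) Ay.
  have h2 := near_pos (diff_sq_r y) By.
  move: h2; apply: filter_app; apply: filterS h1 => w a b; exact: (conj a b).
have Dz : Dset z by split; apply: sqnorm_gt0.
have [Az Bz] := Dz.
have Az0 : A z != 0 by rewrite gt_eqF.
have Bz0 : B z != 0 by rewrite gt_eqF.
pose u := fun w : 'rV[R]_(k + k) => ln (enorm (lsubmx w) / enorm (rsubmx w)).
pose u' := fun w => (ln (A w) - ln (B w)) / 2.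
have uE : forall w, Dset w -> u' w = u w.
  move=> w [Aw Bw]; rewrite /u' /u /enorm ln_div ?posrE ?sqrtr_gt0 //.
  by rewrite !ln_sqrt // mulrBl.
pose L (i : 'I_(k + k)) (w : 'rV[R]_(k + k)) := dotp (lsubmx w) (lsubmx (evec R i)).
pose M (i : 'I_(k + k)) (w : 'rV[R]_(k + k)) := dotp (rsubmx w) (rsubmx (evec R i)).
pose U1 (i : 'I_(k + k)) (w : 'rV[R]_(k + k)) := L i w / A w - M i w / B w.
have hU1 : forall y, Dset y -> forall i, is_derive y (evec R i) u (U1 i y).
  move=> y Dy i; apply: (der_loc HD Dy uE).
  have [Ay By] := Dy.
  have hA := der_comp (der_sq_l y (evec R i)) (is_derive1_ln Ay).
  have hB := der_comp (der_sq_r y (evec R i)) (is_derive1_ln By).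
  apply: der_eq (der_mul (der_sub hA hB) (der_cst (2^-1))) _.
  rewrite /U1 /L /M /=; field.
  by rewrite !gt_eqF.
have hu2 := fun i => der_sub
  (der_mul (der_dotp_l (lsubmx (evec R i)) z (evec R i)) (der_inv Az0 (der_sq_l z (evec R i))))
  (der_mul (der_dotp_r (rsubmx (evec R i)) z (evec R i)) (der_inv Bz0 (der_sq_r z (evec R i)))).
pose S w := (A w)^-1 + (B w)^-1.
have hS : forall y, Dset y -> sqgrad u y = S y.
  move=> y Dy; rewrite (sqgrad_formula (hU1 y Dy)).
  have [Ay By] := Dy.
  transitivity (\sum_i ((A y ^+ 2)^-1 * L i y ^+ 2 + (B y ^+ 2)^-1 * M i y ^+ 2
      + (- 2 / (A y * B y)) * (L i y * M i y))).
    apply: eq_bigr => i _; rewrite /U1; field.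
    by rewrite !gt_eqF.
  rewrite sum_lin3 /L /M sumL2 sumM2 sumLM /S /A /B; field.
  by rewrite !gt_eqF.
have hS1 := fun j => der_add (der_inv Az0 (der_sq_l z (evec R j)))
  (der_inv Bz0 (der_sq_r z (evec R j))).
have [F1 F2 F3] := formulas HD Dz hU1 hu2 hS hS1.
rewrite /pLaplacian -/(infLaplacian u z) F2 F3 (hS z Dz) /=.
rewrite (eq_bigr (fun i => (A z)^-1 * dotp (lsubmx (evec R i)) (lsubmx (evec R i))
   + (- 2 / A z ^+ 2) * L i z ^+ 2
   + (- (B z)^-1) * dotp (rsubmx (evec R i)) (rsubmx (evec R i))
   + (2 / B z ^+ 2) * M i z ^+ 2)); last first.
  move=> i _ /=; rewrite /L /M; move: (A z) (B z) Az0 Bz0 => a b a0 b0.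
  by field; rewrite a0 b0.
rewrite [X in _ + _ * X](eq_bigr (fun j => (- 2 / A z ^+ 3) * L j z ^+ 2 + (2 / B z ^+ 3) * M j z ^+ 2
   + (2 / (A z ^+ 2 * B z) - 2 / (A z * B z ^+ 2)) * (L j z * M j z))); last first.
  move=> i _ /=; rewrite /U1 /L /M -/(A z) -/(B z); move: (A z) (B z) Az0 Bz0 => a b a0 b0.
  by field; rewrite a0 b0.
rewrite sum_lin4 sum_lin3 /L /M sumLL sumMM sumL2 sumM2 sumLM /S -/(A z) -/(B z).
move: (A z) (B z) Az0 Bz0 => a b a0 b0.
by field; rewrite a0 b0.
Qed.
Lemma sum_sq_coord (R : realType) n (y : 'rV[R]_n) : \sum_i y 0 i ^+ 2 = sqnorm y.
Proof. by rewrite /sqnorm /dotp; apply: eq_bigr => i _; rewrite expr2. Qed.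

Lemma der_rhom (R : realType) n m (y : 'rV[R]_n) i : 0 < sqnorm y ->
  is_derive y (evec R i) (fun y => Num.sqrt (sqnorm y) ^+ m)
    (m%:R * Num.sqrt (sqnorm y) ^+ m * y 0 i / sqnorm y).
Proof.
move=> s0.
have h := der_exp m (der_comp (der_sqnorm y (evec R i)) (is_derive1_sqrt s0)).
apply: der_eq h _; rewrite dotp_evec.
set r := Num.sqrt (sqnorm y).
have r0 : 0 < r by rewrite sqrtr_gt0.
have hs : sqnorm y = r ^+ 2 by rewrite sqr_sqrtr // ltW.
rewrite hs; clearbody r.
case: m => [|m]; first by rewrite !mul0r.
rewrite exprSr /=; field; by rewrite gt_eqF.
Qed.

Lemma enorm_gt0 (R : realType) n (y : 'rV[R]_n) : 0 < sqnorm y -> 0 < enorm y.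
Proof. by move=> s0; rewrite /enorm sqrtr_gt0. Qed.

Lemma enormX2 (R : realType) n m (y : 'rV[R]_n) :
  (enorm y ^+ m) ^+ 2 = sqnorm y ^+ m.
Proof. by rewrite -exprM mulnC exprM sqr_sqrtr // sqnorm_ge0. Qed.
Definition tfun (R : realType) n m (phi : 'rV[R]_n -> R) :=
  fun y : 'rV[R]_n => phi y / enorm y ^+ m.

Definition T1fun (R : realType) n m (phi : 'rV[R]_n -> R) (phi1 : 'I_n -> 'rV[R]_n -> R) :=
  fun (i : 'I_n) (y : 'rV[R]_n) =>
    phi1 i y / enorm y ^+ m - m%:R * phi y * y 0 i / (enorm y ^+ m * sqnorm y).

Lemma der_t (R : realType) n m (phi : 'rV[R]_n -> R) (phi1 : 'I_n -> 'rV[R]_n -> R) y i :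
  (forall i, is_derive y (evec R i) phi (phi1 i y)) -> 0 < sqnorm y ->
  is_derive y (evec R i) (tfun m phi) (T1fun m phi phi1 i y).
Proof.
move=> F1 s0.
have a0 : enorm y ^+ m != 0 by rewrite expf_neq0 // gt_eqF // enorm_gt0.
have h := der_mul (F1 i) (der_invB (der_rhom m i s0) a0).
apply: der_eq h _; rewrite /T1fun -/(enorm y).
move: (enorm y ^+ m) a0 (sqnorm y) (gt_eqF s0) => a a0 s sn0.
by field; rewrite a0 sn0.
Qed.

Lemma der_T1 (R : realType) n m (phi : 'rV[R]_n -> R) (phi1 phi2 : 'I_n -> 'rV[R]_n -> R) x :
  (forall y i, is_derive y (evec R i) phi (phi1 i y)) ->
  (forall y i, is_derive y (evec R i) (phi1 i) (phi2 i y)) ->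
  0 < sqnorm x ->
  exists t2 : 'I_n -> R, (forall i, is_derive x (evec R i) (T1fun m phi phi1 i) (t2 i)) /\
   forall i, t2 i = (enorm x ^+ m)^-1 * phi2 i x
     + (- 2 * m%:R / (enorm x ^+ m * sqnorm x)) * (x 0 i * phi1 i x)
     + (m%:R * (m%:R + 2) * phi x / (enorm x ^+ m * sqnorm x ^+ 2)) * (x 0 i ^+ 2)
     + (- m%:R * phi x / (enorm x ^+ m * sqnorm x)) * 1.
Proof.
move=> F1 F2 s0.
have a0 : enorm x ^+ m != 0 by rewrite expf_neq0 // gt_eqF // enorm_gt0.
have sn0 : sqnorm x != 0 by rewrite gt_eqF.
have as0 : enorm x ^+ m * sqnorm x != 0 by rewrite mulf_neq0.
pose h i := der_sub (der_mul (F2 x i) (der_invB (der_rhom m i s0) a0))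
  (der_mul (der_mul (der_mul (der_cst m%:R) (F1 x i)) (der_coord i x (evec R i)))
     (der_invB (der_mul (der_rhom m i s0) (der_sqnorm x (evec R i))) as0)).
eexists; split; first exact: h.
move=> i /=; rewrite evecE eqxx mulr1n dotp_evec -/(enorm x).
clear h; move: (enorm x ^+ m) a0 as0 (sqnorm x) sn0 => a a0 as0 s sn0.

by field; rewrite a0 sn0.
Qed.
Lemma sum_lin2 (R : realType) n (a b : R) (F G : 'I_n -> R) :
  \sum_i (a * F i + b * G i) = a * \sum_i F i + b * \sum_i G i.
Proof. by rewrite !big_split /= -!mulr_sumr. Qed.

Lemma sum_t2 (R : realType) n m (phi : 'rV[R]_n -> R) (phi1 phi2 : 'I_n -> 'rV[R]_n -> R) x
  (t2 : 'I_n -> R) :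
  0 < sqnorm x ->
  \sum_i phi2 i x = 0 ->
  \sum_i x 0 i * phi1 i x = m%:R * phi x ->
  (forall i, t2 i = (enorm x ^+ m)^-1 * phi2 i x
     + (- 2 * m%:R / (enorm x ^+ m * sqnorm x)) * (x 0 i * phi1 i x)
     + (m%:R * (m%:R + 2) * phi x / (enorm x ^+ m * sqnorm x ^+ 2)) * (x 0 i ^+ 2)
     + (- m%:R * phi x / (enorm x ^+ m * sqnorm x)) * 1) ->
  \sum_i t2 i = - m%:R * (n%:R + m%:R - 2) * tfun m phi x / sqnorm x.
Proof.
move=> s0 h2 he ht; rewrite (eq_bigr _ (fun i _ => ht i)) sum_lin4 h2 he sum_sq_coord.
rewrite sumr_const card_ord /tfun.
have a0 : enorm x ^+ m != 0 by rewrite expf_neq0 // gt_eqF // enorm_gt0.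
move: (enorm x ^+ m) a0 (sqnorm x) (gt_eqF s0) => a a0 s sn0.
rewrite -[_ *+ n]mulr_natr.
by field; rewrite a0 sn0.
Qed.

Lemma sum_T1sq (R : realType) n m (phi : 'rV[R]_n -> R) (phi1 : 'I_n -> 'rV[R]_n -> R) y :
  (0 < m)%N -> 0 < sqnorm y ->
  \sum_i phi1 i y ^+ 2 = (m ^ 2)%:R * sqnorm y ^+ (m - 1) ->
  \sum_i y 0 i * phi1 i y = m%:R * phi y ->
  \sum_i T1fun m phi phi1 i y ^+ 2 = (m ^ 2)%:R * (1 - tfun m phi y ^+ 2) / sqnorm y.
Proof.
move=> m0 s0 hg he.
have a0 : enorm y ^+ m != 0 by rewrite expf_neq0 // gt_eqF // enorm_gt0.
have sn0 : sqnorm y != 0 by rewrite gt_eqF.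
have hb : sqnorm y ^+ (m - 1) = (enorm y ^+ m) ^+ 2 / sqnorm y.
  by rewrite enormX2 -{2}(subnK m0) exprD expr1 mulfK.
rewrite (eq_bigr (fun i => (enorm y ^+ m)^-2 * phi1 i y ^+ 2
   + (- 2 * m%:R * phi y / ((enorm y ^+ m) ^+ 2 * sqnorm y)) * (y 0 i * phi1 i y)
   + (m%:R ^+ 2 * phi y ^+ 2 / ((enorm y ^+ m) ^+ 2 * sqnorm y ^+ 2)) * y 0 i ^+ 2)); last first.
  move=> i _; rewrite /T1fun.
  move: (enorm y ^+ m) a0 (sqnorm y) sn0 => a a0 s sn0'.
  by field; rewrite a0 sn0'.
rewrite sum_lin3 hg he sum_sq_coord hb /tfun natrX.
move: (enorm y ^+ m) a0 (sqnorm y) sn0 => a a0 s sn0'.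
by field; rewrite a0 sn0'.
Qed.

Lemma sum_T1x (R : realType) n m (phi : 'rV[R]_n -> R) (phi1 : 'I_n -> 'rV[R]_n -> R) y :
  0 < sqnorm y ->
  \sum_i y 0 i * phi1 i y = m%:R * phi y ->
  \sum_i T1fun m phi phi1 i y * y 0 i = 0.
Proof.
move=> s0 he.
have a0 : enorm y ^+ m != 0 by rewrite expf_neq0 // gt_eqF // enorm_gt0.
have sn0 : sqnorm y != 0 by rewrite gt_eqF.
rewrite (eq_bigr (fun i => (enorm y ^+ m)^-1 * (y 0 i * phi1 i y)
   + (- m%:R * phi y / (enorm y ^+ m * sqnorm y)) * y 0 i ^+ 2)); last first.
  move=> i _; rewrite /T1fun.
  move: (enorm y ^+ m) a0 (sqnorm y) sn0 => a a0 s sn0'.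
  by field; rewrite a0 sn0'.
rewrite sum_lin2 he sum_sq_coord.
move: (enorm y ^+ m) a0 (sqnorm y) sn0 => a a0 s sn0'.
by field; rewrite a0 sn0'.
Qed.
Lemma comp_formulas (R : realType) n (Dset : 'rV[R]_n -> Prop)
  (HD : forall y, Dset y -> \forall z \near y, Dset z)
  (t : 'rV[R]_n -> R) (T1 : 'I_n -> 'rV[R]_n -> R) (t2 : 'I_n -> R) x
  (g G1 G2 H H1 : R -> R) (c : R) :
  Dset x ->
  (forall y, Dset y -> -1 < t y < 1) ->
  (forall y, Dset y -> 0 < sqnorm y) ->
  (forall y, Dset y -> forall i, is_derive y (evec R i) t (T1 i y)) ->
  (forall i, is_derive x (evec R i) (T1 i) (t2 i)) ->
  (forall y, Dset y -> \sum_i T1 i y ^+ 2 = c * (1 - t y ^+ 2) / sqnorm y) ->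
  \sum_i T1 i x * x 0 i = 0 ->
  (forall s : R, -1 < s < 1 -> is_derive s 1 g (G1 s)) ->
  (forall s : R, -1 < s < 1 -> is_derive s 1 G1 (G2 s)) ->
  (forall s : R, -1 < s < 1 -> is_derive s 1 H (H1 s)) ->
  (forall s : R, -1 < s < 1 -> G1 s ^+ 2 * (1 - s ^+ 2) = H s) ->
  [/\ sqgrad (fun y => g (t y)) x = c * H (t x) / sqnorm x,
      laplacian (fun y => g (t y)) x =
        G2 (t x) * (c * (1 - t x ^+ 2) / sqnorm x) + G1 (t x) * \sum_i t2 i &
      infLaplacian (fun y => g (t y)) x =
        G1 (t x) * H1 (t x) * c * (c * (1 - t x ^+ 2) / sqnorm x) / sqnorm x].
Proof.
move=> Dx ht hs hT1 hT2 ST SX hg hG1 hH hGH.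
have hU1 := fun y Dy i => der_comp (hT1 y Dy i) (hg (t y) (ht y Dy)).
have hu2 := fun i => der_mul (der_comp (hT1 x Dx i) (hG1 (t x) (ht x Dx))) (hT2 i).
have sn0 : sqnorm x != 0 by rewrite gt_eqF // hs.
have hS : forall y, Dset y -> sqgrad (fun y => g (t y)) y = c * H (t y) * (sqnorm y)^-1.
  move=> y Dy; rewrite (sqgrad_formula (hU1 y Dy)).
  under eq_bigr do rewrite exprMn.
  by rewrite -mulr_sumr ST // -hGH ?ht //; field; rewrite gt_eqF // hs.
have hS1 := fun j => der_mul (der_mul (der_cst c) (der_comp (hT1 x Dx j) (hH (t x) (ht x Dx))))
  (der_invB (der_sqnorm x (evec R j)) sn0).
have [F1 F2 F3] := formulas HD Dx hU1 hu2 hS hS1.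
split.
- by rewrite hS.
- rewrite F2 (eq_bigr (fun i => G1 (t x) * t2 i + G2 (t x) * T1 i x ^+ 2)); last first.
    by move=> i _ /=; rewrite expr2; ring.
  by rewrite sum_lin2 ST // addrC.
- rewrite F3 (eq_bigr (fun j => (G1 (t x) * c * H1 (t x) / sqnorm x) * T1 j x ^+ 2
     + (- 2 * G1 (t x) * c * H (t x) / sqnorm x ^+ 2) * (T1 j x * x 0 j))); last first.
    move=> j _ /=; rewrite dotp_evec.
    move: (sqnorm x) sn0 => s s0; by field.
  rewrite sum_lin2 ST // SX.
  move: (sqnorm x) sn0 => s s0; by field.
Qed.
Lemma w_pos (R : realType) (s : R) : -1 < s < 1 -> 0 < 1 - s ^+ 2.
Proof. by case/andP => h1 h2; rewrite expr2; nra. Qed.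

Lemma der_w (R : realType) (s : R) :
  is_derive s 1 (fun s : R => 1 - s ^+ 2) (- (2 * s)).
Proof.
apply: der_eq (der_sub (der_cst 1) (der_exp 2 (is_derive_id s 1))) _.
by rewrite /= expr1 mulr1 sub0r.
Qed.

Lemma der_sig (R : realType) (s : R) : -1 < s < 1 ->
  is_derive s 1 (fun s : R => Num.sqrt (1 - s ^+ 2)) (- s / Num.sqrt (1 - s ^+ 2)).
Proof.
move=> hs; have w0 := w_pos hs.
apply: der_eq (der_comp (der_w s) (is_derive1_sqrt w0)) _.
have : Num.sqrt (1 - s ^+ 2) != 0 by rewrite gt_eqF // sqrtr_gt0.
move: (Num.sqrt _) => a a0; by field.
Qed.

Lemma artanh_data (R : realType) (s : R) : -1 < s < 1 ->
  [/\ is_derive s 1 (@artanh R) ((1 - s ^+ 2)^-1),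
      is_derive s 1 (fun s : R => (1 - s ^+ 2)^-1) (2 * s / (1 - s ^+ 2) ^+ 2) &
      ((1 - s ^+ 2)^-1) ^+ 2 * (1 - s ^+ 2) = (1 - s ^+ 2)^-1].
Proof.
move=> hs; have w0 := w_pos hs.
have /andP[h1 h2] := hs.
have ne1 : 1 - s != 0 by rewrite subr_eq0 eq_sym lt_eqF.
have ne2 : 1 + s != 0 by rewrite gt_eqF // -ltrBlDl sub0r.
have pos : 0 < (1 + s) * (1 - s)^-1.
  by rewrite divr_gt0 // ?subr_gt0 // -ltrBlDl sub0r.
have wne : 1 - s ^+ 2 != 0 by rewrite gt_eqF.
split.
- have h := der_mul (der_comp (der_mul (der_add (der_cst 1) (is_derive_id s 1))
     (der_invB (der_sub (der_cst 1) (is_derive_id s 1)) ne1)) (is_derive1_ln pos))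
     (der_cst 2^-1).
  rewrite /artanh; apply: der_eq h _; rewrite /=.
  by field; rewrite ?ne1 ?ne2 ?wne.
- apply: der_eq (der_invB (der_w s) wne) _.
  by field.
- by field.
Qed.

Lemma by_rel (R : realType) (a w L Rhs K : R) :
  a ^+ 2 = w -> L - Rhs = K * (a ^+ 2 - w) -> L = Rhs.
Proof. by move=> h e; apply/eqP; rewrite -subr_eq0 e h subrr mulr0. Qed.

Lemma g2_data (R : realType) (s : R) : -1 < s < 1 ->
  [/\ is_derive s 1 (fun s : R => s / Num.sqrt (1 - s ^+ 2))
        (((1 - s ^+ 2) * Num.sqrt (1 - s ^+ 2))^-1),
      is_derive s 1 (fun s : R => ((1 - s ^+ 2) * Num.sqrt (1 - s ^+ 2))^-1)
        (3 * s / ((1 - s ^+ 2) ^+ 2 * Num.sqrt (1 - s ^+ 2))),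
      is_derive s 1 (fun s : R => ((1 - s ^+ 2) ^+ 2)^-1) (4 * s / (1 - s ^+ 2) ^+ 3) &
      (((1 - s ^+ 2) * Num.sqrt (1 - s ^+ 2))^-1) ^+ 2 * (1 - s ^+ 2) = ((1 - s ^+ 2) ^+ 2)^-1].
Proof.
move=> hs; have w0 := w_pos hs.
have wne : 1 - s ^+ 2 != 0 by rewrite gt_eqF.
have sne : Num.sqrt (1 - s ^+ 2) != 0 by rewrite gt_eqF // sqrtr_gt0.
have wsne : (1 - s ^+ 2) * Num.sqrt (1 - s ^+ 2) != 0 by rewrite mulf_neq0.
have w2ne : (1 - s ^+ 2) ^+ 2 != 0 by rewrite expf_neq0.
have hsq : Num.sqrt (1 - s ^+ 2) ^+ 2 = 1 - s ^+ 2 by rewrite sqr_sqrtr // ltW.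
split.
- apply: der_eq (der_mul (is_derive_id s 1) (der_invB (der_sig hs) sne)) _.
  rewrite /=; set a := Num.sqrt (1 - s ^+ 2) in hsq sne *; clearbody a.
  apply: (by_rel (K := - s ^+ 2 / (a ^+ 3 * (1 - s ^+ 2))) hsq).
  by field; rewrite ?sne ?wne.
- apply: der_eq (der_invB (der_mul (der_w s) (der_sig hs)) wsne) _.
  rewrite /=; set a := Num.sqrt (1 - s ^+ 2) in hsq sne *; clearbody a.
  apply: (by_rel (K := - s / ((1 - s ^+ 2) ^+ 2 * a ^+ 3)) hsq).
  by field; rewrite ?sne ?wne.
- apply: der_eq (der_invB (der_exp 2 (der_w s)) w2ne) _.
  by rewrite /= expr1; field.
- set a := Num.sqrt (1 - s ^+ 2) in hsq sne *; clearbody a.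
  apply: (by_rel (K := - 1 / ((1 - s ^+ 2) ^+ 2 * a ^+ 2)) hsq).
  by field; rewrite ?sne ?wne.
Qed.

Lemma asin_data (R : realType) (s : R) : -1 < s < 1 ->
  [/\ is_derive s 1 (@asin R) ((Num.sqrt (1 - s ^+ 2))^-1),
      is_derive s 1 (fun s : R => (Num.sqrt (1 - s ^+ 2))^-1)
        (s / ((1 - s ^+ 2) * Num.sqrt (1 - s ^+ 2))),
      is_derive s 1 (fun _ : R => (1 : R)) 0 &
      ((Num.sqrt (1 - s ^+ 2))^-1) ^+ 2 * (1 - s ^+ 2) = 1].
Proof.
move=> hs; have w0 := w_pos hs.
have sne : Num.sqrt (1 - s ^+ 2) != 0 by rewrite gt_eqF // sqrtr_gt0.
have wne : 1 - s ^+ 2 != 0 by rewrite gt_eqF.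
have hsq : Num.sqrt (1 - s ^+ 2) ^+ 2 = 1 - s ^+ 2 by rewrite sqr_sqrtr // ltW.
split.
- exact: is_derive1_asin.
- apply: der_eq (der_invB (der_sig hs) sne) _.
  rewrite /=; set a := Num.sqrt (1 - s ^+ 2) in hsq sne *; clearbody a.
  apply: (by_rel (K := - s / ((1 - s ^+ 2) * a ^+ 3)) hsq).
  by field; rewrite ?sne ?wne.
- exact: der_cst.
- set a := Num.sqrt (1 - s ^+ 2) in hsq sne *; clearbody a.
  apply: (by_rel (K := - 1 / a ^+ 2) hsq).
  by field; rewrite ?sne ?wne.
Qed.
Lemma gradE (R : realType) n (f : 'rV[R]_n -> R) y i : grad f y 0 i = pderiv i f y.
Proof. by rewrite /grad mxE. Qed.

Lemma dotp_grad (R : realType) n (f g : 'rV[R]_n -> R) y :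
  dotp (grad f y) (grad g y) = \sum_j pderiv j f y * pderiv j g y.
Proof. by rewrite /dotp; apply: eq_bigr => j _; rewrite !gradE. Qed.

Lemma pLap_local (R : realType) n (Dset : 'rV[R]_n -> Prop)
  (HD : forall y, Dset y -> \forall z \near y, Dset z)
  (u v : 'rV[R]_n -> R) x p :
  Dset x -> (forall y, Dset y -> u y = v y) -> pLaplacian p u x = pLaplacian p v x.
Proof.
move=> Dx uv.
have e1 : forall y, Dset y -> forall i, pderiv i u y = pderiv i v y.
  move=> y Dy i; rewrite /pderiv; apply: near_eq_derive.
  by apply: filterS (HD y Dy) => z Dz; exact: uv.
have e2 : forall y, Dset y -> sqgrad u y = sqgrad v y.
  by move=> y Dy; rewrite !sqgradE; apply: eq_bigr => i _; rewrite e1.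
have e3 : forall i, pderiv i (pderiv i u) x = pderiv i (pderiv i v) x.
  move=> i; rewrite /pderiv; apply: near_eq_derive.
  by apply: filterS (HD x Dx) => z Dz; exact: e1.
have e4 : forall j, pderiv j (sqgrad u) x = pderiv j (sqgrad v) x.
  move=> j; rewrite /pderiv; apply: near_eq_derive.
  by apply: filterS (HD x Dx) => z Dz; exact: e2.
rewrite /pLaplacian (e2 x Dx) /laplacian.
under eq_bigr => i _ do rewrite e3.
rewrite !dotp_grad.
have E : \sum_j pderiv j u x * pderiv j (sqgrad u) x = \sum_j pderiv j v x * pderiv j (sqgrad v) x.
  by apply: eq_bigr => j _; rewrite (e1 x Dx j) (e4 j).
exact: (congr1 (fun X => sqgrad v x * (\sum_i pderiv i (pderiv i v) x) + (p - 2) / 2 * X) E).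
Qed.
Definition DsetM (R : realType) n m (phi : 'rV[R]_n -> R) (y : 'rV[R]_n) :=
  0 < sqnorm y /\ phi y ^+ 2 < sqnorm y ^+ m.

Lemma polyfunXn (R : realType) n (p : mpoly.mpoly n R) k y :
  polyfun (p ^+ k) y = polyfun p y ^+ k.
Proof.
elim: k => [|k ih]; first by rewrite !expr0 /polyfun mpoly.meval1.
by rewrite !exprS polyfunM ih.
Qed.

Lemma polyfunB (R : realType) n (p q : mpoly.mpoly n R) y :
  polyfun (p - q) y = polyfun p y - polyfun q y.
Proof. exact: mpoly.mevalB. Qed.

Lemma Dset_open (R : realType) n m (P : mpoly.mpoly n R) y :
  DsetM m (polyfun P) y -> \forall z \near y, DsetM m (polyfun P) z.
Proof.
move=> [s0 hlt].
have h1 := near_pos (diff_sqnorm y) s0.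
pose Q := (\sum_(i < n) MX R i * MX R i) ^+ m - P ^+ 2.
have e : forall z, polyfun Q z = sqnorm z ^+ m - polyfun P z ^+ 2.
  by move=> z; rewrite polyfunB !polyfunXn sqnorm_polyfun.
have q0 : 0 < polyfun Q y by rewrite e subr_gt0.
have h2 := near_pos (diff_polyfun Q y) q0.
move: h2; apply: filter_app; apply: filterS h1 => z a b; split => //.
by rewrite -subr_gt0 -e.
Qed.

Lemma t_range (R : realType) n m (phi : 'rV[R]_n -> R) y :
  DsetM m phi y -> -1 < tfun m phi y < 1.
Proof.
move=> [s0 hlt].
have a0 : 0 < sqnorm y ^+ m by rewrite exprn_gt0.
have h : tfun m phi y ^+ 2 < 1.
  by rewrite /tfun expr_div_n enormX2 ltr_pdivrMr // mul1r.
move: h; rewrite expr2 => h; apply/andP; split; nra.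
Qed.

Lemma pLap_split (R : realType) n p (u : 'rV[R]_n -> R) x :
  pLaplacian p u x = sqgrad u x * laplacian u x + (p - 2) / 2 * infLaplacian u x.
Proof. by []. Qed.

Lemma core (R : realType) m m1 (P : mpoly.mpoly (m * m1 + 2) R) :
  (0 < m)%N ->
  P \is @mpoly.ishomog1 (m * m1 + 2) R m (mpoly.mpoly_mdeg__canonical__mpoly_Measure (m * m1 + 2)) ->
  (forall x, sqnorm (grad (polyfun P) x) = (m ^ 2)%:R * sqnorm x ^+ (m - 1)) ->
  (forall x, laplacian (polyfun P) x = 0) ->
  forall (g G1 G2 H H1 : R -> R),
  (forall s : R, -1 < s < 1 -> is_derive s 1 g (G1 s)) ->
  (forall s : R, -1 < s < 1 -> is_derive s 1 G1 (G2 s)) ->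
  (forall s : R, -1 < s < 1 -> is_derive s 1 H (H1 s)) ->
  (forall s : R, -1 < s < 1 -> G1 s ^+ 2 * (1 - s ^+ 2) = H s) ->
  forall x, DsetM m (polyfun P) x ->
  [/\ sqgrad (fun y => g (tfun m (polyfun P) y)) x =
        (m ^ 2)%:R * H (tfun m (polyfun P) x) / sqnorm x,
      laplacian (fun y => g (tfun m (polyfun P) y)) x =
        G2 (tfun m (polyfun P) x) * ((m ^ 2)%:R * (1 - tfun m (polyfun P) x ^+ 2) / sqnorm x)
        + G1 (tfun m (polyfun P) x) *
          (- m%:R * ((m * m1 + 2)%:R + m%:R - 2) * tfun m (polyfun P) x / sqnorm x) &
      infLaplacian (fun y => g (tfun m (polyfun P) y)) x =
        G1 (tfun m (polyfun P) x) * H1 (tfun m (polyfun P) x) * (m ^ 2)%:R *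
        ((m ^ 2)%:R * (1 - tfun m (polyfun P) x ^+ 2) / sqnorm x) / sqnorm x].
Proof.
move=> hm hP hgrad hlap g G1 G2 H H1 hg hG1 hH hGH x Dx.
pose phi := polyfun P.
pose phi1 (i : 'I_(m * m1 + 2)) := polyfun (mpoly.mderiv i P).
pose phi2 (i : 'I_(m * m1 + 2)) := polyfun (mpoly.mderiv i (mpoly.mderiv i P)).
have F1 : forall y i, is_derive y (evec R i) phi (phi1 i y).
  by move=> y i; exact: der_polyfun.
have F2 : forall y i, is_derive y (evec R i) (phi1 i) (phi2 i y).
  by move=> y i; exact: der_polyfun.
have hpd : forall i, pderiv i phi = phi1 i.
  by move=> i; apply/funext => y; case: (F1 y i).
have e2 : forall i, pderiv i (pderiv i phi) x = phi2 i x.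
  move=> i; have := congr1 (fun f => pderiv i f x) (hpd i); move=> ->.
  by case: (F2 x i).
have F3 : \sum_i phi2 i x = 0.
  by rewrite -[RHS](hlap x) /laplacian; apply: eq_bigr => i _; rewrite e2.
have F4 : forall y, \sum_i phi1 i y ^+ 2 = (m ^ 2)%:R * sqnorm y ^+ (m - 1).
  by move=> y; rewrite -(sqgrad_formula (F1 y)); exact: hgrad.
have F5 : forall y : 'rV[R]_(m * m1 + 2), \sum_i y 0 i * phi1 i y = m%:R * phi y.
  by move=> y; exact: euler_fun.
have HD := @Dset_open R _ m P.
have hs : forall y, DsetM m phi y -> 0 < sqnorm y by move=> y [].
have ht : forall y, DsetM m phi y -> -1 < tfun m phi y < 1 by move=> y; exact: t_range.
have hT1 : forall y, DsetM m phi y -> forall i,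
    is_derive y (evec R i) (tfun m phi) (T1fun m phi phi1 i y).
  by move=> y Dy i; exact: (der_t m i (F1 y) (hs y Dy)).
have [t2 [hT2 ht2]] := der_T1 m F1 F2 (hs x Dx).
have ST : forall y, DsetM m phi y ->
    \sum_i T1fun m phi phi1 i y ^+ 2 = (m ^ 2)%:R * (1 - tfun m phi y ^+ 2) / sqnorm y.
  by move=> y Dy; exact: (sum_T1sq hm (hs y Dy) (F4 y) (F5 y)).
have SX := sum_T1x (hs x Dx) (F5 x).
have [A B C] := comp_formulas HD Dx ht hs hT1 hT2 ST SX hg hG1 hH hGH.
split => //.
by rewrite B (sum_t2 (hs x Dx) F3 (F5 x) ht2).
Qed.


Unset Implicit Arguments.
Local Close Scope classical_set_scope.

Theorem mainTheorem5 (R : realType) :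
  (forall (m m1 : nat) (P : mpoly.mpoly (m * m1 + 2) R),
     (0 < m)%N -> (0 < m1)%N ->
     P \is @mpoly.ishomog1 (m * m1 + 2) R m (mpoly.mpoly_mdeg__canonical__mpoly_Measure (m * m1 + 2)) ->
     (forall x, sqnorm (grad (polyfun P) x) = (m ^ 2)%:R * sqnorm x ^+ (m - 1)) ->
     (forall x, laplacian (polyfun P) x = 0) ->
     let phi := polyfun P in
     let D := fun x : 'rV[R]_(m * m1 + 2) => x != 0 /\ phi x ^+ 2 < sqnorm x ^+ m in
     (* (i) *)
     (forall x, D x ->
        pLaplacian (1 + m1%:R)
          (fun y => artanh (phi y / enorm y ^+ m)) x = 0) /\
     (* (ii) *)
     (forall x, D x ->
        pLaplacian (1 + m1%:R / 2)
          (fun y => phi y / Num.sqrt (enorm y ^+ (2 * m) - phi y ^+ 2)) x = 0) /\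
     (* (iii) *)
     (forall x, D x ->
        infLaplacian (fun y => asin (phi y / enorm y ^+ m)) x = 0)) /\
  (* (iv) *)
  (forall (k : nat), (0 < k)%N ->
     forall z : 'rV[R]_(k + k), lsubmx z != 0 -> rsubmx z != 0 ->
       pLaplacian k%:R
         (fun w : 'rV[R]_(k + k) => ln (enorm (lsubmx w) / enorm (rsubmx w))) z = 0).

Proof.
split; last first.
  by move=> k k0 z hl hr; exact: part4.
move=> m m1 P hm hm1 hP hgrad hlap phi D.
have DD : forall x, D x -> DsetM m (polyfun P) x.
  by move=> x [x0 hlt]; split => //; exact: sqnorm_gt0.
split; [|split].
- move=> x Dx; have Dx' := DD x Dx.
  have h1 : forall s : R, -1 < s < 1 -> is_derive s 1 (@artanh R) ((1 - s ^+ 2)^-1).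
    by move=> s hs; case: (artanh_data hs).
  have h2 : forall s : R, -1 < s < 1 ->
      is_derive s 1 (fun s : R => (1 - s ^+ 2)^-1) (2 * s / (1 - s ^+ 2) ^+ 2).
    by move=> s hs; case: (artanh_data hs).
  have h3 : forall s : R, -1 < s < 1 ->
      ((1 - s ^+ 2)^-1) ^+ 2 * (1 - s ^+ 2) = (1 - s ^+ 2)^-1.
    by move=> s hs; case: (artanh_data hs).
  have [S L I] := core hm hP hgrad hlap h1 h2 h2 h3 Dx'.
  rewrite pLap_split S L I.
  have hw := w_pos (t_range Dx').
  have s0 : sqnorm x != 0 by rewrite gt_eqF // sqnorm_gt0 //; case: Dx.
  move: (tfun m (polyfun P) x) hw (sqnorm x) s0 => tau hw s s0.
  have w0 : 1 - tau ^+ 2 != 0 by rewrite gt_eqF.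
  rewrite natrD natrM natrX.
  by field; rewrite ?w0 ?s0.
- move=> x Dx; have Dx' := DD x Dx.
  have eqf : forall y, DsetM m (polyfun P) y ->
      phi y / Num.sqrt (enorm y ^+ (2 * m) - phi y ^+ 2) =
      (fun s : R => s / Num.sqrt (1 - s ^+ 2)) (tfun m (polyfun P) y).
    move=> y [s0 hlt]; rewrite /tfun /= -/phi.
    have a0 : 0 < enorm y ^+ m by rewrite exprn_gt0 // enorm_gt0.
    have e2m : enorm y ^+ (2 * m) = (enorm y ^+ m) ^+ 2 by rewrite (mulnC 2 m) exprM.
    have hlt' : phi y ^+ 2 < (enorm y ^+ m) ^+ 2 by rewrite enormX2.
    rewrite e2m; move: (enorm y ^+ m) a0 hlt' => a a0 hlt'.
    move: (phi y) hlt' => f hlt'.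
    have X0 : 0 < a ^+ 2 - f ^+ 2 by rewrite subr_gt0.

    have -> : 1 - (f / a) ^+ 2 = (a ^+ 2 - f ^+ 2) * (a^-1) ^+ 2.
      by field; rewrite gt_eqF.
    rewrite sqrtrM ?ltW // sqrtr_sqr ger0_norm ?invr_ge0 ?ltW //.
    have sX : Num.sqrt (a ^+ 2 - f ^+ 2) != 0 by rewrite gt_eqF // sqrtr_gt0.
    move: (Num.sqrt _) sX => q q0.
    by field; rewrite ?q0 ?gt_eqF.
  rewrite (pLap_local (@Dset_open R _ m P) (v := fun y =>
      (fun s : R => s / Num.sqrt (1 - s ^+ 2)) (tfun m (polyfun P) y)) _ Dx' eqf).
  have h1 : forall s : R, -1 < s < 1 -> is_derive s 1 (fun s : R => s / Num.sqrt (1 - s ^+ 2))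
        (((1 - s ^+ 2) * Num.sqrt (1 - s ^+ 2))^-1).
    by move=> s hs; case: (g2_data hs).
  have h2 : forall s : R, -1 < s < 1 ->
      is_derive s 1 (fun s : R => ((1 - s ^+ 2) * Num.sqrt (1 - s ^+ 2))^-1)
        (3 * s / ((1 - s ^+ 2) ^+ 2 * Num.sqrt (1 - s ^+ 2))).
    by move=> s hs; case: (g2_data hs).
  have h3 : forall s : R, -1 < s < 1 ->
      is_derive s 1 (fun s : R => ((1 - s ^+ 2) ^+ 2)^-1) (4 * s / (1 - s ^+ 2) ^+ 3).
    by move=> s hs; case: (g2_data hs).
  have h4 : forall s : R, -1 < s < 1 ->
      (((1 - s ^+ 2) * Num.sqrt (1 - s ^+ 2))^-1) ^+ 2 * (1 - s ^+ 2) = ((1 - s ^+ 2) ^+ 2)^-1.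
    by move=> s hs; case: (g2_data hs).
  have [S L I] := core hm hP hgrad hlap h1 h2 h3 h4 Dx'.
  rewrite pLap_split S L I.
  have hr := t_range Dx'.
  have hw := w_pos hr.
  have s0 : sqnorm x != 0 by rewrite gt_eqF // sqnorm_gt0 //; case: Dx.
  move: (tfun m (polyfun P) x) hr hw (sqnorm x) s0 => tau hr hw s s0.
  have w0 : 1 - tau ^+ 2 != 0 by rewrite gt_eqF.
  have sg0 : Num.sqrt (1 - tau ^+ 2) != 0 by rewrite gt_eqF // sqrtr_gt0.
  move: (Num.sqrt (1 - tau ^+ 2)) sg0 => sg sg0.
  rewrite natrD natrM natrX.
  by field; rewrite ?w0 ?s0 ?sg0.
- move=> x Dx; have Dx' := DD x Dx.
  have h1 : forall s : R, -1 < s < 1 -> is_derive s 1 (@asin R) ((Num.sqrt (1 - s ^+ 2))^-1).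
    by move=> s hs; case: (asin_data hs).
  have h2 : forall s : R, -1 < s < 1 ->
      is_derive s 1 (fun s : R => (Num.sqrt (1 - s ^+ 2))^-1)
        (s / ((1 - s ^+ 2) * Num.sqrt (1 - s ^+ 2))).
    by move=> s hs; case: (asin_data hs).
  have h3 : forall s : R, -1 < s < 1 -> is_derive s 1 (fun _ : R => (1 : R)) 0.
    by move=> s hs; case: (asin_data hs).
  have h4 : forall s : R, -1 < s < 1 ->
      ((Num.sqrt (1 - s ^+ 2))^-1) ^+ 2 * (1 - s ^+ 2) = 1.
    by move=> s hs; case: (asin_data hs).
  have [S L I] := core hm hP hgrad hlap h1 h2 h3 h4 Dx'.
  by rewrite I /= mulr0 !mul0r.
Qed.
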